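(* Let $\Theta$ be a basic predicate signature with set of constants $C$, let $\bar C$ be an infinite denumerable set of new constants, and let $\Gamma$ be a Hintikka set for $\mathbf{Tm}^*$ in the universe $C\cup\bar C$. Then there exist a four-valued modal structure $\mathfrak A=\langle U,\cdot^{\mathfrak A}\rangle$ over $\Theta(\bar C)$ with $(C\cup\bar C)^{\mathfrak A}=U$ and a $\mathbf{Tm}^*$-valuation $\bar v$ over $\mathfrak A$ such that $\bar v(\varphi)=\mathsf L$ for every signed formula $\mathsf L{:}\varphi\in\Gamma$.
   Context: Syntax: $\Theta$ has predicate symbols of arity $\ge1$ and constants $C$, no function symbols, no equality; $\Theta(\bar C)$ adds the constants $\bar C$. Formulas: atomic $P\tau_1\ldots\tau_n$ ($\tau_i$ variables or constants), $\neg\varphi$, $\Box\varphi$, $\forall x\varphi$, $\varphi\to\psi$; $\exists x\varphi$ abbreviates $\neg\forall x\neg\varphi$. For a formula $\varphi$ with at most $x$ free, $\varphi(c)$ denotes $\varphi[x/c]$. Variants $\varphi\sim\psi$: obtained from one another by adding/deleting void quantifiers or renaming bound variables (keeping free variables in place). A signed formula is $\mathsf L{:}\varphi$ with $\mathsf L\in\{\mathsf T,\mathsf t,\mathsf f,\mathsf F\}$ and $\varphi$ a closed formula over $\Theta(\bar C)$. Semantics: $\tilde\neg$: $\mathsf T\mapsto\{\mathsf F\},\mathsf t\mapsto\{\mathsf f\},\mathsf f\mapsto\{\mathsf t\},\mathsf F\mapsto\{\mathsf T\}$; write $\neg\mathsf L$ for the unique element of $\tilde\neg\mathsf L$. $a\tilde\to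 b$ (rows $a$, columns $b$ in order $\mathsf T,\mathsf t,\mathsf f,\mathsf F$): row $\mathsf T$: $\{\mathsf T\},\{\mathsf t\},\{\mathsf f\},\{\mathsf F\}$; row $\mathsf t$: $\{\mathsf T\},\{\mathsf T,\mathsf t\},\{\mathsf f\},\{\mathsf f\}$; row $\mathsf f$: $\{\mathsf T\},\{\mathsf T,\mathsf t\},\{\mathsf T,\mathsf t\},\{\mathsf t\}$; row $\mathsf F$: all $\{\mathsf T\}$. $\tilde\Box_1\mathsf T=\{\mathsf T,\mathsf t\}$, $\tilde\Box_1a=\{\mathsf f,\mathsf F\}$ for $a\neq\mathsf T$. $\tilde\forall^d_4(X)=\{\min X\}$, order $\mathsf F<\mathsf f<\mathsf t<\mathsf T$. A four-valued modal structure over $\Theta(\bar C)$: $\mathfrak A=\langle U,\cdot^{\mathfrak A}\rangle$, $U\ne\emptyset$, $P^{\mathfrak A}:U^n\to\{\mathsf T,\mathsf t,\mathsf f,\mathsf F\}$ for $n$-ary $P$, $c^{\mathfrak A}\in U$ for constants. When every element of $U$ is denoted by a constant, a $\mathbf{Tm}^*$-valuation over $\mathfrak A$ is a map $v$ from closed formulas over $\Theta(\bar C)$ to $\{\mathsf T,\mathsf t,\mathsf f,\mathsf F\}$ with: $v(Pc_1\ldots c_n)=P^{\mathfrak A}(c_1^{\mathfrak A},\ldots,c_n^{\mathfrak A})$; $v(\neg\varphi)\in\tilde\neg v(\varphi)$; $v(\Box\varphi)\in\tilde\Box_1 v(\varphi)$; $v(\varphi\to\psi)\in v(\varphi)\tilde\to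 v(\psi)$; $v(\forall x\varphi)\in\tilde\forall^d_4(\{v(\varphi[x/c]):c\in C\cup\bar C\})$; $v(\varphi)=v(\varphi')$ if $\varphi\sim\varphi'$. Hintikka set: a set $\Gamma$ of signed formulas over $\Theta(\bar C)$ such that: (1) if $\mathsf L{:}\varphi,\mathsf L'{:}\varphi'\in\Gamma$ and $\varphi\sim\varphi'$ then $\mathsf L=\mathsf L'$; (2) if $\mathsf L{:}\neg\varphi\in\Gamma$ then $\neg\mathsf L{:}\varphi\in\Gamma$; (3) if $\mathsf T{:}\Box\varphi$ or $\mathsf t{:}\Box\varphi$ is in $\Gamma$ then $\mathsf T{:}\varphi\in\Gamma$; (4) if $\mathsf F{:}\Box\varphi$ or $\mathsf f{:}\Box\varphi$ is in $\Gamma$ then $\mathsf L{:}\varphi\in\Gamma$ for a unique $\mathsf L\in\{\mathsf t,\mathsf f,\mathsf F\}$; (5) if $\mathsf T{:}(\varphi\to\psi)\in\Gamma$ then either $\mathsf F{:}\varphi\in\Gamma$, or $\mathsf T{:}\psi\in\Gamma$, or $\mathsf t{:}\varphi,\mathsf t{:}\psi\in\Gamma$, or $\mathsf f{:}\varphi,\mathsf t{:}\psi\in\Gamma$, or $\mathsf f{:}\varphi,\mathsf f{:}\psi\in\Gamma$; (6) if $\mathsf t{:}(\varphi\to\psi)\in\Gamma$ then one of the pairs $\{\mathsf T{:}\varphi,\mathsf t{:}\psi\}$, $\{\mathsf t{:}\varphi,\mathsf t{:}\psi\}$, $\{\mathsf f{:}\varphi,\mathsf t{:}\psi\}$, $\{\mathsf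 f{:}\varphi,\mathsf f{:}\psi\}$ is included in $\Gamma$; (7) if $\mathsf f{:}(\varphi\to\psi)\in\Gamma$ then one of $\{\mathsf T{:}\varphi,\mathsf f{:}\psi\}$, $\{\mathsf t{:}\varphi,\mathsf f{:}\psi\}$, $\{\mathsf t{:}\varphi,\mathsf F{:}\psi\}$ is included in $\Gamma$; (8) if $\mathsf F{:}(\varphi\to\psi)\in\Gamma$ then $\mathsf T{:}\varphi,\mathsf F{:}\psi\in\Gamma$; (9) if $\mathsf T{:}\forall x\varphi\in\Gamma$ then $\mathsf T{:}\varphi(c)\in\Gamma$ for every $c\in C\cup\bar C$; (10) if $\mathsf t{:}\forall x\varphi\in\Gamma$ then $\mathsf t{:}\varphi(c)\in\Gamma$ for some $c\in C\cup\bar C$ and for every $c'\in(C\cup\bar C)\setminus\{c\}$ either $\mathsf T{:}\varphi(c')\in\Gamma$ or $\mathsf t{:}\varphi(c')\in\Gamma$; (11) if $\mathsf f{:}\forall x\varphi\in\Gamma$ then $\mathsf f{:}\varphi(c)\in\Gamma$ for some $c\in C\cup\bar C$ and for every $c'\in(C\cup\bar C)\setminus\{c\}$, one of $\mathsf T{:}\varphi(c')$, $\mathsf t{:}\varphi(c')$, $\mathsf f{:}\varphi(c')$ belongs to $\Gamma$ and $\mathsf F{:}\varphi(c')\notin\Gamma$; (12) if $\mathsf F{:}\forall x\varphi\in\Gamma$ then $\mathsf F{:}\varphi(c)\in\Gamma$ for some $c\in C\cup\bar C$. *)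

(* Defs.v *)
From Stdlib Require Import List Arith.
Import ListNotations.

Section Syntax.
Variables (Pred : Type) (ar : Pred -> nat) (K : Type).

Inductive term : Type :=
| Var : nat -> term
| Cst : K -> term.

Inductive form : Type :=
| Atom : Pred -> list term -> form
| Neg : form -> form
| Box : form -> form
| Forall : nat -> form -> form
| Imp : form -> form -> form.

Fixpoint wf (phi : form) : Prop :=
  match phi with
  | Atom p ts => length ts = ar p
  | Neg a => wf a
  | Box a => wf a
  | Forall _ a => wf a
  | Imp a b => wf a /\ wf b
  end.

Definition term_has_var (x : nat) (t : term) : Prop :=
  match t with Var y => y = x | Cst _ => False end.

Fixpoint free (x : nat) (phi : form) : Prop :=
  match phi with
  | Atom _ ts => exists t, In t ts /\ term_has_var x t
  | Neg a => free x a
  | Box a => free x a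
  | Forall y a => y <> x /\ free x a
  | Imp a b => free x a \/ free x b
  end.

Definition closed (phi : form) : Prop := forall x, ~ free x phi.

Definition subst_term (x : nat) (s : term) (t : term) : term :=
  match t with
  | Var y => if Nat.eqb y x then s else t
  | Cst _ => t
  end.

Fixpoint subst (x : nat) (s : term) (phi : form) : form :=
  match phi with
  | Atom p ts => Atom p (map (subst_term x s) ts)
  | Neg a => Neg (subst x s a)
  | Box a => Box (subst x s a)
  | Forall y a => if Nat.eqb y x then Forall y a else Forall y (subst x s a)
  | Imp a b => Imp (subst x s a) (subst x s b)
  end.

Definition inst (x : nat) (c : K) (phi : form) : form := subst x (Cst c) phi.

Fixpoint substitutable (y x : nat) (phi : form) : Prop :=
  match phi with
  | Atom _ _ => True
  | Neg a => substitutable y x a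
  | Box a => substitutable y x a
  | Forall z a => z = x \/ ((free x a -> z <> y) /\ substitutable y x a)
  | Imp a b => substitutable y x a /\ substitutable y x b
  end.

Inductive variant : form -> form -> Prop :=
| var_refl : forall a, variant a a
| var_sym : forall a b, variant a b -> variant b a
| var_trans : forall a b c, variant a b -> variant b c -> variant a c
| var_void : forall x a, ~ free x a -> variant (Forall x a) a
| var_rename : forall x y a, ~ free y a -> substitutable y x a ->
    variant (Forall x a) (Forall y (subst x (Var y) a))
| var_neg : forall a b, variant a b -> variant (Neg a) (Neg b)
| var_box : forall a b, variant a b -> variant (Box a) (Box b)
| var_forall : forall x a b, variant a b -> variant (Forall x a) (Forall x b)
| var_imp : forall a b a' b', variant a a' -> variant b b' ->
    variant (Imp a b) (Imp a' b').

End Syntax.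

Arguments Var {K}.
Arguments Cst {K}.
Arguments Atom {Pred K}.
Arguments Neg {Pred K}.
Arguments Box {Pred K}.
Arguments Forall {Pred K}.
Arguments Imp {Pred K}.

Inductive label : Type := LT | Lt | Lf | LF.

Definition rank (l : label) : nat :=
  match l with LF => 0 | Lf => 1 | Lt => 2 | LT => 3 end.

Definition negL (l : label) : label :=
  match l with LT => LF | Lt => Lf | Lf => Lt | LF => LT end.

Definition box_set (a r : label) : Prop :=
  match a with
  | LT => r = LT \/ r = Lt
  | _ => r = Lf \/ r = LF
  end.

Definition imp_set (a b r : label) : Prop :=
  match a, b with
  | LT, LT => r = LT
  | LT, Lt => r = Lt
  | LT, Lf => r = Lf
  | LT, LF => r = LF
  | Lt, LT => r = LT
  | Lt, Lt => r = LT \/ r = Lt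
  | Lt, Lf => r = Lf
  | Lt, LF => r = Lf
  | Lf, LT => r = LT
  | Lf, Lt => r = LT \/ r = Lt
  | Lf, Lf => r = LT \/ r = Lt
  | Lf, LF => r = Lt
  | LF, _ => r = LT
  end.

Section Semantics.
Variables (Pred : Type) (ar : Pred -> nat) (K : Type).
Notation form := (form Pred K).

Definition hintikka (G : label -> form -> Prop) : Prop :=
  (forall L phi, G L phi -> wf Pred ar K phi /\ closed Pred K phi) /\
  (forall L L' phi phi', G L phi -> G L' phi' -> variant Pred K phi phi' -> L = L') /\
  (forall L phi, G L (Neg phi) -> G (negL L) phi) /\
  (forall phi, (G LT (Box phi) \/ G Lt (Box phi)) -> G LT phi) /\
  (forall phi, (G LF (Box phi) \/ G Lf (Box phi)) ->
     exists L, (L = Lt \/ L = Lf \/ L = LF) /\ G L phi /\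
       forall L', (L' = Lt \/ L' = Lf \/ L' = LF) -> G L' phi -> L' = L) /\
  (forall phi psi, G LT (Imp phi psi) ->
     G LF phi \/ G LT psi \/ (G Lt phi /\ G Lt psi) \/
     (G Lf phi /\ G Lt psi) \/ (G Lf phi /\ G Lf psi)) /\
  (forall phi psi, G Lt (Imp phi psi) ->
     (G LT phi /\ G Lt psi) \/ (G Lt phi /\ G Lt psi) \/
     (G Lf phi /\ G Lt psi) \/ (G Lf phi /\ G Lf psi)) /\
  (forall phi psi, G Lf (Imp phi psi) ->
     (G LT phi /\ G Lf psi) \/ (G Lt phi /\ G Lf psi) \/ (G Lt phi /\ G LF psi)) /\
  (forall phi psi, G LF (Imp phi psi) -> G LT phi /\ G LF psi) /\
  (forall x phi, G LT (Forall x phi) -> forall c, G LT (inst Pred K x c phi)) /\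
  (forall x phi, G Lt (Forall x phi) ->
     exists c, G Lt (inst Pred K x c phi) /\
       forall c', c' <> c -> G LT (inst Pred K x c' phi) \/ G Lt (inst Pred K x c' phi)) /\
  (forall x phi, G Lf (Forall x phi) ->
     exists c, G Lf (inst Pred K x c phi) /\
       forall c', c' <> c ->
         (G LT (inst Pred K x c' phi) \/ G Lt (inst Pred K x c' phi) \/
          G Lf (inst Pred K x c' phi)) /\ ~ G LF (inst Pred K x c' phi)) /\
  (forall x phi, G LF (Forall x phi) -> exists c, G LF (inst Pred K x c phi)).

(* A Tm^*-valuation over the four-valued modal structure <U, I, cI>
   (I interprets predicates on argument lists of length ar p, cI interprets
   constants), in which every element of U is denoted by a constant. *)
Definition cf (phi : form) : Prop := wf Pred ar K phi /\ closed Pred K phi.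

Definition valuation (U : Type) (I : Pred -> list U -> label) (cI : K -> U)
  (v : form -> label) : Prop :=
  (forall p (cs : list K), cf (Atom p (map Cst cs)) ->
     v (Atom p (map Cst cs)) = I p (map cI cs)) /\
  (forall phi, cf (Neg phi) -> v (Neg phi) = negL (v phi)) /\
  (forall phi, cf (Box phi) -> box_set (v phi) (v (Box phi))) /\
  (forall phi psi, cf (Imp phi psi) -> imp_set (v phi) (v psi) (v (Imp phi psi))) /\
  (forall x phi, cf (Forall x phi) ->
     (exists c, v (Forall x phi) = v (inst Pred K x c phi)) /\
     (forall c, rank (v (Forall x phi)) <= rank (v (inst Pred K x c phi)))) /\
  (forall phi phi', cf phi -> cf phi' -> variant Pred K phi phi' -> v phi = v phi').

End Semantics.

(* Main.v *)
From Stdlib Require Import List Arith Lia Classical ClassicalEpsilon FunctionalExtensionality.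
Import ListNotations.
Require Import Defs.

Definition updn {K : Type} (r : nat -> option K) (y : nat) : nat -> option K :=
  fun z => if Nat.eqb z y then None else r z.
Definition upd {K : Type} (r : nat -> option K) (x : nat) (c : K) : nat -> option K :=
  fun z => if Nat.eqb z x then Some c else r z.
Definition sub_term {K : Type} (r : nat -> option K) (t : term K) : term K :=
  match t with
  | Var z => match r z with Some c => Cst c | None => Var z end
  | Cst c => Cst c
  end.
Fixpoint sub {P K : Type} (r : nat -> option K) (a : form P K) : form P K :=
  match a with
  | Atom p ts => Atom p (map (sub_term r) ts)
  | Neg b => Neg (sub r b)
  | Box b => Box (sub r b)
  | Forall y b => Forall y (sub (updn r y) b)
  | Imp b d => Imp (sub r b) (sub r d)
  end.

Lemma sub_ext {P K : Type} (a : form P K) : forall r r',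
  (forall z, free P K z a -> r z = r' z) -> sub r a = sub r' a.
Proof.
  induction a; intros r r' H; simpl in *.
  - f_equal. apply map_ext_in. intros t Ht. destruct t as [w|c]; simpl; auto.
    rewrite (H w); auto. exists (Var w); simpl; auto.
  - f_equal; auto.
  - f_equal; auto.
  - f_equal. apply IHa. intros z Hz. unfold updn.
    destruct (Nat.eqb_spec z n); auto.
  - f_equal; auto.
Qed.

Lemma free_sub {P K : Type} (a : form P K) : forall r z,
  free P K z (sub r a) -> free P K z a /\ r z = None.
Proof.
  induction a; intros r z H; simpl in *.
  - destruct H as [t [Ht Hv]]. apply in_map_iff in Ht as [t0 [E Ht0]]. subst t.
    destruct t0 as [w|c]; simpl in Hv.
    + destruct (r w) eqn:E; simpl in Hv; [contradiction|]. subst w.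
      split; auto. exists (Var z); simpl; auto.
    + contradiction.
  - auto.
  - auto.
  - destruct H as [Hn Hf]. apply IHa in Hf as [Hf Hr]. unfold updn in Hr.
    destruct (Nat.eqb_spec z n); [congruence|]. auto.
  - destruct H as [H|H]; [apply IHa1 in H|apply IHa2 in H]; tauto.
Qed.

Lemma subst_notfree {P K : Type} (a : form P K) : forall x s,
  ~ free P K x a -> subst P K x s a = a.
Proof.
  induction a; intros x s H; simpl in *.
  - f_equal. rewrite <- (map_id l) at 2. apply map_ext_in. intros t Ht.
    destruct t as [w|c]; simpl; auto. destruct (Nat.eqb_spec w x); auto.
    subst. exfalso. apply H. exists (Var x); simpl; auto.
  - f_equal; auto.
  - f_equal; auto.
  - destruct (Nat.eqb_spec n x); auto. f_equal. apply IHa. intro; apply H; auto.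
  - f_equal; auto.
Qed.

Lemma sub_none {P K : Type} (a : form P K) : forall r,
  (forall z, r z = None) -> sub r a = a.
Proof.
  induction a; intros r H; simpl.
  - f_equal. rewrite <- (map_id l) at 2. apply map_ext_in. intros t Ht.
    destruct t as [w|c]; simpl; auto. rewrite H; auto.
  - f_equal; auto.
  - f_equal; auto.
  - f_equal. apply IHa. intro z. unfold updn. destruct (Nat.eqb z n); auto.
  - f_equal; auto.
Qed.

Lemma inst_sub {P K : Type} (a : form P K) : forall r x c,
  r x = None -> inst P K x c (sub r a) = sub (upd r x c) a.
Proof.
  unfold inst. induction a; intros r x c H; simpl.
  - f_equal. rewrite map_map. apply map_ext_in. intros t Ht.
    destruct t as [w|d]; simpl; auto. unfold upd.
    destruct (Nat.eqb_spec w x).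
    + subst. rewrite H. simpl. rewrite Nat.eqb_refl. auto.
    + destruct (r w); simpl; auto. apply Nat.eqb_neq in n. rewrite n. auto.
  - f_equal; auto.
  - f_equal; auto.
  - destruct (Nat.eqb_spec n x).
    + subst. f_equal. apply sub_ext. intros z _. unfold updn, upd.
      destruct (Nat.eqb_spec z x); auto.
    + f_equal. rewrite IHa. apply sub_ext. intros z _. unfold updn, upd.
      destruct (Nat.eqb_spec z x); destruct (Nat.eqb_spec z n); subst; auto. congruence.
      unfold updn. apply Nat.eqb_neq in n0. rewrite Nat.eqb_sym. rewrite n0. auto.
  - f_equal; auto.
Qed.

Lemma lemM {P K : Type} (a : form P K) : forall r x y c,
  r y = Some c -> substitutable P K y x a ->
  sub r (subst P K x (Var y) a) = sub (upd r x c) a.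
Proof.
  induction a; intros r x y c Hy Hs; simpl in *.
  - f_equal. rewrite map_map. apply map_ext_in. intros t Ht.
    destruct t as [w|d]; simpl; auto. unfold upd.
    destruct (Nat.eqb_spec w x); simpl; auto. rewrite Hy. auto.
  - f_equal; auto.
  - f_equal; auto.
  - destruct (Nat.eqb_spec n x).
    + subst. simpl. f_equal. apply sub_ext. intros z _. unfold updn, upd.
      destruct (Nat.eqb_spec z x); auto.
    + simpl. destruct Hs as [Hs|[Hf Hs]]; [congruence|].
      destruct (Nat.eqb_spec n y).
      * subst. destruct (classic (free P K x a)) as [Fx|Fx].
        { exfalso. apply (Hf Fx). auto. }
        rewrite subst_notfree by auto. f_equal. apply sub_ext. intros z Hz.
        unfold updn, upd. destruct (Nat.eqb_spec z y); auto.
        destruct (Nat.eqb_spec z x); subst; auto. contradiction.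
      * f_equal. rewrite (IHa _ x y c); auto.
        -- apply sub_ext. intros z _. unfold updn, upd.
           destruct (Nat.eqb_spec z x); destruct (Nat.eqb_spec z n); subst; auto; congruence.
        -- unfold updn. apply Nat.eqb_neq in n1. rewrite Nat.eqb_sym, n1. auto.
  - destruct Hs. f_equal; auto.
Qed.

Lemma lemL {P K : Type} (a : form P K) : forall (r r' : nat -> option K) x y,
  r x = None -> r' y = None ->
  (forall z, free P K z a -> z <> x -> r z = r' z) -> substitutable P K y x a ->
  subst P K x (Var y) (sub r a) = sub r' (subst P K x (Var y) a).
Proof.
  induction a; intros r r' x y Hx Hy Ha Hs; simpl in *.
  - f_equal. rewrite !map_map. apply map_ext_in. intros t Ht.
    destruct t as [w|d]; simpl; auto.
    destruct (Nat.eqb_spec w x).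
    + subst. rewrite Hx. simpl. rewrite Nat.eqb_refl. simpl. rewrite Hy. auto.
    + simpl. rewrite <- (Ha w); auto. 2:{ exists (Var w); simpl; auto. }
      destruct (r w); simpl; auto. apply Nat.eqb_neq in n. rewrite n. auto.
  - f_equal; eauto.
  - f_equal; eauto.
  - destruct (Nat.eqb_spec n x).
    + subst. simpl. f_equal. apply sub_ext. intros z Hz. unfold updn.
      destruct (Nat.eqb_spec z x); auto.
    + simpl. destruct Hs as [Hs|[Hf Hs]]; [congruence|].
      destruct (Nat.eqb_spec n y).
      * subst. destruct (classic (free P K x a)) as [Fx|Fx].
        { exfalso. apply (Hf Fx). auto. }
        rewrite !subst_notfree; auto.
        2:{ intro F. apply free_sub in F. tauto. }
        f_equal. apply sub_ext. intros z Hz. unfold updn.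
        destruct (Nat.eqb_spec z y); auto. apply Ha; auto.
        intro; subst; contradiction.
      * f_equal. apply IHa; auto.
        -- unfold updn. apply Nat.eqb_neq in n0. rewrite Nat.eqb_sym, n0. auto.
        -- unfold updn. apply Nat.eqb_neq in n1. rewrite Nat.eqb_sym, n1. auto.
        -- intros z Hz Hzx. unfold updn. destruct (Nat.eqb_spec z n); auto.
  - destruct Hs. f_equal; [apply IHa1|apply IHa2]; auto.
Qed.

Lemma substitutable_sub {P K : Type} (a : form P K) : forall r x y,
  substitutable P K y x a -> substitutable P K y x (sub r a).
Proof.
  induction a; intros r x y Hs; simpl in *; auto.
  - destruct Hs as [Hs|[Hf Hs]]; auto. right. split; auto.
    intro F. apply free_sub in F. tauto.
  - destruct Hs; split; auto.
Qed.

Lemma variant_sub {P K : Type} (a b : form P K) :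
  variant P K a b -> forall r, variant P K (sub r a) (sub r b).
Proof.
  induction 1; intros r; simpl.
  - apply var_refl.
  - apply var_sym; auto.
  - eapply var_trans; eauto.
  - assert (E : sub (updn r x) a = sub r a).
    { apply sub_ext. intros z Hz. unfold updn. destruct (Nat.eqb_spec z x); auto.
      subst; contradiction. }
    rewrite <- E. apply var_void. intro F. apply free_sub in F. destruct F as [F _]. contradiction.
  - rewrite <- (lemL a (updn r x) (updn r y) x y).
    + apply var_rename.
      * intro F. apply free_sub in F. tauto.
      * apply substitutable_sub; auto.
    + unfold updn. rewrite Nat.eqb_refl. auto.
    + unfold updn. rewrite Nat.eqb_refl. auto.
    + intros z Hz Hzx. unfold updn. destruct (Nat.eqb_spec z x); [congruence|].
      destruct (Nat.eqb_spec z y); auto. subst; contradiction.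
    + auto.
  - apply var_neg; auto.
  - apply var_box; auto.
  - apply var_forall; auto.
  - apply var_imp; auto.
Qed.

Definition bP (Q : Prop) : bool := if excluded_middle_informative Q then true else false.
Lemma bP_t (Q : Prop) : Q -> bP Q = true.
Proof. unfold bP; destruct excluded_middle_informative; tauto. Qed.
Lemma bP_f (Q : Prop) : ~ Q -> bP Q = false.
Proof. unfold bP; destruct excluded_middle_informative; tauto. Qed.
Lemma bP_iff (Q R : Prop) : (Q <-> R) -> bP Q = bP R.
Proof. intros H. destruct (classic Q). rewrite !bP_t; tauto. rewrite !bP_f; tauto. Qed.

Definition cls {P K : Type} (G : label -> form P K -> Prop) (L : label) (a : form P K) : Prop :=
  exists b, variant P K a b /\ G L b.

Definition atomv {P K : Type} (G : label -> form P K -> Prop) (p : P) (ts : list (term K)) : label :=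
  if bP (G Lt (Atom p ts)) then Lt else
  if bP (G Lf (Atom p ts)) then Lf else
  if bP (G LF (Atom p ts)) then LF else LT.

Definition boxv (a : label) (bt bf : bool) : label :=
  match a with LT => if bt then Lt else LT | _ => if bf then Lf else LF end.

Definition impv (a b : label) (bt : bool) : label :=
  let two := if bt then Lt else LT in
  match a, b with
  | LT, l => l
  | Lt, LT => LT | Lt, Lt => two | Lt, Lf => Lf | Lt, LF => Lf
  | Lf, LT => LT | Lf, Lt => two | Lf, Lf => two | Lf, LF => Lt
  | LF, _ => LT
  end.

Lemma boxv_ok a bt bf : box_set a (boxv a bt bf).
Proof. destruct a, bt, bf; simpl; auto. Qed.
Lemma impv_ok a b bt : imp_set a b (impv a b bt).
Proof. destruct a, b, bt; simpl; auto. Qed.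

Definition minv {K : Type} (f : K -> label) : label :=
  if bP (exists c, f c = LF) then LF else
  if bP (exists c, f c = Lf) then Lf else
  if bP (exists c, f c = Lt) then Lt else LT.

Lemma minv_is {K : Type} (f : K -> label) l :
  (exists c, f c = l) -> (forall c, rank l <= rank (f c)) -> minv f = l.
Proof.
  intros [c Hc] H. unfold minv.
  destruct l.
  - rewrite !bP_f; auto; intros [d Hd]; specialize (H d); rewrite Hd in H; simpl in H; lia.
  - rewrite bP_f, bP_f, bP_t; eauto; intros [d Hd]; specialize (H d); rewrite Hd in H; simpl in H; lia.
  - rewrite bP_f, bP_t; eauto; intros [d Hd]; specialize (H d); rewrite Hd in H; simpl in H; lia.
  - rewrite bP_t; eauto.
Qed.

Lemma minv_spec {K : Type} (f : K -> label) : inhabited K ->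
  (exists c, minv f = f c) /\ (forall c, rank (minv f) <= rank (f c)).
Proof.
  intros [k]. unfold minv.
  destruct (classic (exists c, f c = LF)) as [[c Hc]|N1].
  { rewrite bP_t by eauto. split; eauto. simpl; lia. }
  rewrite bP_f by auto.
  destruct (classic (exists c, f c = Lf)) as [[c Hc]|N2].
  { rewrite bP_t by eauto. split; eauto. intros d. destruct (f d) eqn:E; simpl; try lia.
    exfalso; eauto. }
  rewrite bP_f by auto.
  destruct (classic (exists c, f c = Lt)) as [[c Hc]|N3].
  { rewrite bP_t by eauto. split; eauto. intros d. destruct (f d) eqn:E; simpl; try lia;
    exfalso; eauto. }
  rewrite bP_f by auto. split.
  - exists k. destruct (f k) eqn:E; auto; exfalso; eauto.
  - intros d. destruct (f d) eqn:E; simpl; try lia; exfalso; eauto.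
Qed.

Lemma minv_const {K : Type} (f : K -> label) l : inhabited K ->
  (forall c, f c = l) -> minv f = l.
Proof.
  intros [k] H. apply minv_is. exists k; auto. intros c; rewrite H; auto.
Qed.

Fixpoint ev {P K : Type} (G : label -> form P K -> Prop) (n : nat) (a : form P K) : label :=
  match n with
  | 0 => LT
  | S n =>
    match a with
    | Atom p ts => atomv G p ts
    | Neg b => negL (ev G n b)
    | Box b => boxv (ev G n b) (bP (cls G Lt (Box b))) (bP (cls G Lf (Box b)))
    | Forall x b => minv (fun c => ev G n (inst P K x c b))
    | Imp b d => impv (ev G n b) (ev G n d) (bP (cls G Lt (Imp b d)))
    end
  end.

Fixpoint fsize {P K : Type} (a : form P K) : nat :=
  match a with
  | Atom _ _ => 1
  | Neg b => S (fsize b)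
  | Box b => S (fsize b)
  | Forall _ b => S (fsize b)
  | Imp b d => S (fsize b + fsize d)
  end.

Lemma fsize_subst {P K : Type} (a : form P K) : forall x s, fsize (subst P K x s a) = fsize a.
Proof.
  induction a; intros x s; simpl; auto.
  destruct (Nat.eqb n x); simpl; auto.
Qed.

Lemma ev_stable {P K : Type} (G : label -> form P K -> Prop) : forall n m a,
  fsize a <= n -> fsize a <= m -> ev G n a = ev G m a.
Proof.
  induction n; intros m a Hn Hm.
  - destruct a; simpl in Hn; lia.
  - destruct m. { destruct a; simpl in Hm; lia. }
    destruct a; simpl in *; auto.
    + rewrite (IHn m); auto; lia.
    + rewrite (IHn m); auto; lia.
    + f_equal. apply functional_extensionality. intro c. apply IHn;
      unfold inst; rewrite fsize_subst; lia.
    + rewrite (IHn m a1), (IHn m a2); auto; lia.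
Qed.

Definition V {P K : Type} (G : label -> form P K -> Prop) (a : form P K) : label :=
  ev G (fsize a) a.

Lemma V_imp {P K : Type} (G : label -> form P K -> Prop) a b :
  V G (Imp a b) = impv (V G a) (V G b) (bP (cls G Lt (Imp a b))).
Proof.
  unfold V; simpl. rewrite (ev_stable G _ (fsize a) a), (ev_stable G _ (fsize b) b); auto; lia.
Qed.

Lemma V_forall {P K : Type} (G : label -> form P K -> Prop) x a :
  V G (Forall x a) = minv (fun c => V G (inst P K x c a)).
Proof.
  unfold V; simpl. f_equal. apply functional_extensionality. intro c.
  apply ev_stable; unfold inst; rewrite fsize_subst; lia.
Qed.

Lemma variant_V {P K : Type} (G : label -> form P K -> Prop) (HK : inhabited K) (a b : form P K) :
  variant P K a b -> forall r, V G (sub r a) = V G (sub r b).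
Proof.
  induction 1; intros r; simpl.
  - auto.
  - auto.
  - congruence.
  - rewrite V_forall. apply minv_const; auto. intro c.
    rewrite inst_sub. 2:{ unfold updn; rewrite Nat.eqb_refl; auto. }
    f_equal. apply sub_ext. intros z Hz. unfold upd, updn.
    destruct (Nat.eqb_spec z x); auto. subst; contradiction.
  - rewrite !V_forall. f_equal. apply functional_extensionality. intro c.
    rewrite !inst_sub by (unfold updn; rewrite Nat.eqb_refl; auto).
    rewrite (lemM a _ x y c). 2:{ unfold upd; rewrite Nat.eqb_refl; auto. } 2: auto.
    f_equal. apply sub_ext. intros z Hz. unfold upd, updn.
    destruct (Nat.eqb_spec z x); auto.
    destruct (Nat.eqb_spec z y); auto. subst; contradiction.
  - unfold V; simpl. fold (V G (sub r a)) (V G (sub r b)). rewrite IHvariant; auto.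
  - unfold V; simpl. fold (V G (sub r a)) (V G (sub r b)). rewrite IHvariant.
    assert (Hv : variant P K (Box (sub r a)) (Box (sub r b))) by
      (apply var_box, variant_sub; auto).
    f_equal; apply bP_iff; unfold cls; split; intros [c [Hc Gc]]; exists c; split; auto;
      eapply var_trans; eauto; apply var_sym; auto.
  - rewrite !V_forall. f_equal. apply functional_extensionality. intro c.
    rewrite !inst_sub by (unfold updn; rewrite Nat.eqb_refl; auto). auto.
  - rewrite !V_imp. rewrite IHvariant1, IHvariant2.
    assert (Hv : variant P K (Imp (sub r a) (sub r b)) (Imp (sub r a') (sub r b'))) by
      (apply var_imp; apply variant_sub; auto).
    f_equal; apply bP_iff; unfold cls; split; intros [c [Hc Gc]]; exists c; split; auto;
      eapply var_trans; eauto; apply var_sym; auto.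
Qed.

Lemma hint_V {P K : Type} (ar : P -> nat) (G : label -> form P K -> Prop)
  (HG : hintikka P ar K G) (HK : inhabited K) : forall n a, fsize a <= n -> forall L, G L a -> V G a = L.
Proof.
  destruct HG as (H0 & H1 & H2 & H3 & H4 & H5 & H6 & H7 & H8 & H9 & H10 & H11 & H12).
  assert (U : forall L L' a, G L a -> G L' a -> L = L') by
    (intros; eapply H1; eauto; apply var_refl).
  assert (NC : forall L L' a, G L a -> L' <> L -> ~ cls G L' a) by
    (intros L L' a Ga Hne [b [Hb Gb]]; apply Hne; symmetry; eapply H1; eauto).
  induction n; intros a Hs L Ga.
  { destruct a; simpl in Hs; lia. }
  destruct a as [p ts|b|b|x b|b d]; simpl in Hs.
  - unfold V; simpl. unfold atomv.
    destruct L.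
    + rewrite !bP_f; auto; intro Gx; specialize (U _ _ _ Ga Gx); discriminate.
    + rewrite bP_t; auto.
    + rewrite bP_f, bP_t; auto; intro Gx; specialize (U _ _ _ Ga Gx); discriminate.
    + rewrite bP_f, bP_f, bP_t; auto; intro Gx; specialize (U _ _ _ Ga Gx); discriminate.
  - unfold V; simpl. fold (V G b). rewrite (IHn b (ltac:(lia)) (negL L)); auto.
    destruct L; auto.
  - unfold V; simpl. fold (V G b).
    assert (Cs : forall L', G L' (Box b) -> cls G L' (Box b)) by
      (intros; exists (Box b); split; auto; apply var_refl).
    destruct L.
    + rewrite (IHn b (ltac:(lia)) LT) by (apply H3; auto). simpl.
      rewrite bP_f; auto. apply (NC LT); auto; discriminate.
    + rewrite (IHn b (ltac:(lia)) LT) by (apply H3; auto). simpl.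
      rewrite bP_t; auto.
    + destruct (H4 b (or_intror Ga)) as [L' [HL' [GL' _]]].
      rewrite (IHn b (ltac:(lia)) L') by auto.
      destruct HL' as [->|[->| ->]]; simpl; rewrite bP_t; auto.
    + destruct (H4 b (or_introl Ga)) as [L' [HL' [GL' _]]].
      rewrite (IHn b (ltac:(lia)) L') by auto.
      assert (~ cls G Lf (Box b)) by (apply (NC LF); auto; discriminate).
      destruct HL' as [->|[->| ->]]; simpl; rewrite bP_f; auto.
  - rewrite V_forall.
    assert (IH : forall c L', G L' (inst P K x c b) -> V G (inst P K x c b) = L').
    { intros c L' G'. apply IHn; auto. unfold inst; rewrite fsize_subst; lia. }
    destruct L.
    + destruct HK as [k]. apply minv_is.
      * exists k. apply IH. apply H9; auto.
      * intros c. rewrite (IH c LT) by (apply H9; auto). auto.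
    + destruct (H10 x b Ga) as [c [Gc Hr]]. apply minv_is.
      * exists c; auto.
      * intros c'. destruct (classic (c' = c)) as [->|Hn].
        { rewrite (IH c Lt Gc); auto. }
        destruct (Hr c' Hn) as [G'|G']; rewrite (IH _ _ G'); simpl; lia.
    + destruct (H11 x b Ga) as [c [Gc Hr]]. apply minv_is.
      * exists c; auto.
      * intros c'. destruct (classic (c' = c)) as [->|Hn].
        { rewrite (IH c Lf Gc); auto. }
        destruct (Hr c' Hn) as [[G'|[G'|G']] _]; rewrite (IH _ _ G'); simpl; lia.
    + destruct (H12 x b Ga) as [c Gc]. apply minv_is.
      * exists c; auto.
      * intros; simpl; lia.
  - rewrite V_imp.
    assert (Cs : forall L', G L' (Imp b d) -> cls G L' (Imp b d)) by
      (intros; exists (Imp b d); split; auto; apply var_refl).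
    assert (Ib : forall l, G l b -> V G b = l) by (intros; apply IHn; auto; lia).
    assert (Id : forall l, G l d -> V G d = l) by (intros; apply IHn; auto; lia).
    destruct L.
    + rewrite (bP_f _ (NC LT Lt _ Ga ltac:(discriminate))).
      destruct (H5 b d Ga) as [G1|[G1|[[G1 G2]|[[G1 G2]|[G1 G2]]]]];
      repeat match goal with
      | Hg : G ?l b |- _ => rewrite (Ib l Hg); clear Hg
      | Hg : G ?l d |- _ => rewrite (Id l Hg); clear Hg
      end; destruct (V G b), (V G d); simpl; auto.
    + rewrite (bP_t _ (Cs Lt Ga)).
      destruct (H6 b d Ga) as [[G1 G2]|[[G1 G2]|[[G1 G2]|[G1 G2]]]];
      repeat match goal with
      | Hg : G ?l b |- _ => rewrite (Ib l Hg); clear Hg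
      | Hg : G ?l d |- _ => rewrite (Id l Hg); clear Hg
      end; simpl; auto.
    + destruct (H7 b d Ga) as [[G1 G2]|[[G1 G2]|[G1 G2]]];
      repeat match goal with
      | Hg : G ?l b |- _ => rewrite (Ib l Hg); clear Hg
      | Hg : G ?l d |- _ => rewrite (Id l Hg); clear Hg
      end; simpl; auto.
    + destruct (H8 b d Ga) as [G1 G2];
      repeat match goal with
      | Hg : G ?l b |- _ => rewrite (Ib l Hg); clear Hg
      | Hg : G ?l d |- _ => rewrite (Id l Hg); clear Hg
      end; simpl; auto.
Qed.

Theorem mainTheorem3
  (Pred : Type) (ar : Pred -> nat) (ar_pos : forall p, 1 <= ar p)
  (C : Type) (Cbar : Type)
  (Cbar_denum : exists e : nat -> Cbar, (forall m n, e m = e n -> m = n) /\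
                                        (forall c, exists n, e n = c))
  (G : label -> form Pred (C + Cbar) -> Prop)
  (HG : hintikka Pred ar (C + Cbar) G) :
  exists (U : Type) (I : Pred -> list U -> label) (cI : C + Cbar -> U),
    inhabited U /\
    (forall u : U, exists c, cI c = u) /\
    exists v : form Pred (C + Cbar) -> label,
      valuation Pred ar (C + Cbar) U I cI v /\
      (forall L phi, G L phi -> v phi = L).
Proof.
  assert (HK : inhabited (C + Cbar)).
  { destruct Cbar_denum as [e _]. exact (inhabits (inr (e 0))). }
  exists (C + Cbar)%type, (fun p us => atomv G p (map Cst us)), (fun c => c).
  split; [auto|]. split; [intro u; exists u; auto|].
  exists (V G). split.
  - unfold valuation. split; [|split; [|split; [|split; [|split]]]].
    + intros p cs _. unfold V; simpl. rewrite map_id. auto.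
    + intros phi _. reflexivity.
    + intros phi _. apply boxv_ok.
    + intros phi psi _. rewrite V_imp. apply impv_ok.
    + intros x phi _. rewrite V_forall. apply minv_spec; auto.
    + intros phi phi' _ _ Hv.
      pose proof (variant_V G HK phi phi' Hv (fun _ => None)) as E.
      rewrite !sub_none in E; auto.
  - intros L phi Gp. eapply hint_V; eauto.
Qed.
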